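(* The rules (mix) and (sc$_n$) ($n\ge2$) are $\mathsf{GK(A_m)^r}$-admissible: for all finite multisets $\Gamma,\Delta,\Pi,\Sigma$ of $\mathcal{L}_{A_m}^{\Box}$-formulas, if $\Gamma\Rightarrow\Delta$ and $\Pi\Rightarrow\Sigma$ are $\mathsf{GK(A_m)^r}$-derivable then so is $\Gamma,\Pi\Rightarrow\Sigma,\Delta$; and for every $n\ge2$, if $n\Gamma\Rightarrow n\Delta$ is $\mathsf{GK(A_m)^r}$-derivable then so is $\Gamma\Rightarrow\Delta$.
   Context: $\mathcal{L}_{A_m}^{\Box}$-formulas are built from a countably infinite set of variables using binary $\to$ and unary $\Box$. A sequent $\Gamma\Rightarrow\Delta$ is an ordered pair of finite multisets of formulas; $\Gamma,\Delta$ is multiset union, $n\Gamma$ is $\Gamma$ repeated $n$ times, $n[\varphi]$ is $n$ copies of $\varphi$, $\Box\Gamma=[\Box\varphi:\varphi\in\Gamma]$. The calculus $\mathsf{GK(A_m)^r}$ has the rules: (id) $\Delta\Rightarrow\Delta$ (no premises); ($\to\Rightarrow$) from $\Gamma,\psi\Rightarrow\varphi,\Delta$ infer $\Gamma,\varphi\to\psi\Rightarrow\Delta$; ($\Rightarrow\to$) from $\Gamma,\varphi\Rightarrow\psi,\Delta$ infer $\Gamma\Rightarrow\varphi\to\psi,\Delta$; and for each $k\ge1$, $n\ge0$ the rule ($\Box_{k,n}$): from $\Gamma_0\Rightarrow$ and $\Gamma_i\Rightarrow k[\varphi_i]$ ($i=1,\dots,n$) infer $\Delta,\Box\Gamma\Rightarrow\Box\varphi_1,\dots,\Box\varphi_n,\Delta$,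 where $k\Gamma=\Gamma_0\uplus\Gamma_1\uplus\dots\uplus\Gamma_n$. A derivation is a finite tree of sequents in which each node with its parents is a rule instance. *)

(* Defs.v *)
From Stdlib Require Import List Permutation Arith.
Import ListNotations.

Inductive form : Type :=
| Var : nat -> form
| Imp : form -> form -> form
| Box : form -> form.

Fixpoint rep {A : Type} (n : nat) (l : list A) : list A :=
  match n with
  | 0 => []
  | S n' => l ++ rep n' l
  end.

(* Multisets are represented by lists; every rule's conclusion is taken
   up to permutation of antecedent and succedent, so [GKr G D] depends only
   on the multisets underlying G and D. *)
Inductive GKr : list form -> list form -> Prop :=
| GK_id : forall G D X,
    Permutation G X -> Permutation D X -> GKr G D
| GK_impL : forall G D Gm Dl phi psi,
    GKr (Gm ++ [psi]) (phi :: Dl) ->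
    Permutation G (Gm ++ [Imp phi psi]) -> Permutation D Dl ->
    GKr G D
| GK_impR : forall G D Gm Dl phi psi,
    GKr (Gm ++ [phi]) (psi :: Dl) ->
    Permutation G Gm -> Permutation D (Imp phi psi :: Dl) ->
    GKr G D
(* (Box_{k,n}): ps = [(Gamma_1,phi_1); ...; (Gamma_n,phi_n)] *)
| GK_box : forall (k : nat) (G D Dl Gm G0 : list form)
                  (ps : list (list form * form)),
    1 <= k ->
    Permutation (rep k Gm) (G0 ++ concat (map fst ps)) ->
    GKr G0 [] ->
    (forall p, In p ps -> GKr (fst p) (repeat (snd p) k)) ->
    Permutation G (Dl ++ map Box Gm) ->
    Permutation D (map Box (map snd ps) ++ Dl) ->
    GKr G D.

(* Main.v *)
Require Import Defs.
From Stdlib Require Import List Permutation Arith Lia Classical.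
Import ListNotations.


Lemma pc_cons {A} (x:A) r R X: Permutation R (x :: X) -> Permutation r X -> Permutation (x :: r) R.
Proof. intros H1 H2. rewrite H1, H2. reflexivity. Qed.
Lemma pc_app {A} (a:list A) r R X: Permutation R (a ++ X) -> Permutation r X -> Permutation (a ++ r) R.
Proof. intros H1 H2. rewrite H1, H2. reflexivity. Qed.
Lemma pc_last {A} (a:list A) R X: Permutation R (a ++ X) -> Permutation [] X -> Permutation a R.
Proof. intros H1 H2. rewrite H1, <- H2, app_nil_r. reflexivity. Qed.
Lemma fc_cons_skip {A} (x y:A) R1 X: Permutation R1 (x :: X) -> Permutation (y :: R1) (x :: y :: X).
Proof. intros H; rewrite H; apply perm_swap. Qed.
Lemma fc_app_skip {A} (x:A) b R1 X: Permutation R1 (x :: X) -> Permutation (b ++ R1) (x :: b ++ X).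
Proof. intros H; rewrite H. apply Permutation_sym, Permutation_middle. Qed.
Lemma fc_end {A} (x:A): Permutation [x] (x :: []).
Proof. reflexivity. Qed.
Lemma fa_end {A} (a:list A): Permutation a (a ++ []).
Proof. rewrite app_nil_r; reflexivity. Qed.
Lemma fa_cons_skip {A} (a:list A) y R1 X: Permutation R1 (a ++ X) -> Permutation (y :: R1) (a ++ y :: X).
Proof. intros H; rewrite H. apply Permutation_middle. Qed.
Lemma fa_app_skip {A} (a:list A) b R1 X: Permutation R1 (a ++ X) -> Permutation (b ++ R1) (a ++ b ++ X).
Proof. intros H; rewrite H. rewrite !app_assoc. apply Permutation_app_tail, Permutation_app_comm. Qed.
Lemma fa_last_skip {A} (a:list A) b X: Permutation b (a ++ X) -> Permutation b (a ++ X).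
Proof. auto. Qed.

Ltac pfront :=
  match goal with
  | |- Permutation (?x :: ?R1) (?x :: _) => apply Permutation_refl
  | |- Permutation (?y :: ?R1) (?x :: _) => apply fc_cons_skip; pfront
  | |- Permutation (?b ++ ?R1) (?x :: _) => apply fc_app_skip; pfront
  | |- Permutation (?a ++ ?R1) (?a ++ _) => apply Permutation_refl
  | |- Permutation ?a (?a ++ _) => apply fa_end
  | |- Permutation (?y :: ?R1) (?a ++ _) => apply fa_cons_skip; pfront
  | |- Permutation (?b ++ ?R1) (?a ++ _) => apply fa_app_skip; pfront
  end.

Ltac pnorm := simpl; repeat rewrite <- ?app_assoc, ?app_nil_r; simpl.

Ltac psolve0 :=
  match goal with
  | |- Permutation ?l ?l => apply Permutation_refl
  | |- Permutation [] [] => apply Permutation_refl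
  | |- Permutation (?x :: ?r) ?R => eapply (pc_cons x r R); [pfront | psolve0]
  | |- Permutation (?a ++ ?r) ?R => eapply (pc_app a r R); [pfront | psolve0]
  | |- Permutation ?a ?R => eapply (pc_last a R); [pfront | psolve0]
  end.
Ltac psolve := pnorm; psolve0.

Lemma GKr_perm G D G' D' : GKr G D -> Permutation G G' -> Permutation D D' -> GKr G' D'.
Proof.
  intros H HG HD. destruct H.
  - apply (GK_id _ _ X); [rewrite <- HG; exact H | rewrite <- HD; exact H0].
  - eapply GK_impL; [eassumption| rewrite <- HG; eassumption | rewrite <- HD; eassumption].
  - eapply GK_impR; [eassumption| rewrite <- HG; eassumption | rewrite <- HD; eassumption].
  - eapply GK_box; [eassumption| eassumption | eassumption | eassumption | rewrite <- HG; eassumption | rewrite <- HD; eassumption].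
Qed.

Lemma GKr_ctx G D X : GKr G D -> GKr (X ++ G) (D ++ X).
Proof.
  intros H. induction H.
  - apply (GK_id _ _ (X ++ X0)). rewrite H; reflexivity. rewrite H0. apply Permutation_app_comm.
  - apply (GK_impL _ _ (X ++ Gm) (Dl ++ X) phi psi).
    + eapply GKr_perm; [exact IHGKr| psolve | psolve].
    + rewrite H0; psolve.
    + rewrite H1; psolve.
  - apply (GK_impR _ _ (X ++ Gm) (Dl ++ X) phi psi).
    + eapply GKr_perm; [exact IHGKr| psolve | psolve].
    + rewrite H0; psolve.
    + rewrite H1; psolve.
  - eapply (GK_box k _ _ (X ++ Dl)); eauto.
    + rewrite H4; psolve.
    + rewrite H5; psolve.
Qed.

Lemma GKr_nil : GKr [] [].
Proof. apply (GK_id _ _ []); constructor. Qed.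

Lemma rep_app n (a b : list form) : Permutation (rep n (a ++ b)) (rep n a ++ rep n b).
Proof. induction n; simpl. reflexivity. rewrite IHn. psolve. Qed.
Lemma rep_perm n (a b : list form) : Permutation a b -> Permutation (rep n a) (rep n b).
Proof. intros H; induction n; simpl. reflexivity. rewrite IHn, H. reflexivity. Qed.
Lemma rep_add {A} a b (l : list A) : rep (a + b) l = rep a l ++ rep b l.
Proof. induction a; simpl; auto. rewrite IHa, app_assoc. auto. Qed.
Lemma rep_mul {A} a b (l : list A) : rep a (rep b l) = rep (a * b) l.
Proof. induction a; simpl; auto. rewrite IHa, rep_add. auto. Qed.
Lemma rep_nil {A} n : @rep A n [] = [].
Proof. induction n; simpl; auto. Qed.
Lemma rep_single {A} n (x:A) : rep n [x] = repeat x n.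
Proof. induction n; simpl; auto. rewrite IHn; auto. Qed.
Lemma rep_repeat {A} c k (x:A) : rep c (repeat x k) = repeat x (c * k).
Proof. induction c; simpl; auto. rewrite IHc, repeat_app. auto. Qed.
Lemma in_rep {A} n (x:A) l : In x (rep n l) -> In x l.
Proof. induction n; simpl. tauto. intros H; apply in_app_or in H; tauto. Qed.
Lemma concat_perm {A} (L L' : list (list A)) : Permutation L L' -> Permutation (concat L) (concat L').
Proof.
  induction 1; simpl. reflexivity. rewrite IHPermutation; reflexivity.
  rewrite !app_assoc. apply Permutation_app_tail, Permutation_app_comm.
  rewrite IHPermutation1; auto.
Qed.
Lemma rep_concat c (ls : list (list form)) : Permutation (rep c (concat ls)) (concat (map (rep c) ls)).
Proof. induction ls; simpl. rewrite rep_nil; auto. rewrite rep_app, IHls. reflexivity. Qed.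
Lemma concat_repeat k (C : list form) : Permutation (concat (map (fun c => repeat c k) C)) (rep k C).
Proof.
  induction C; simpl. rewrite rep_nil; auto.
  rewrite IHC. change (a :: C) with ([a] ++ C). rewrite rep_app, rep_single. reflexivity.
Qed.

Inductive GKn : nat -> list form -> list form -> Prop :=
| Kn_id : forall n G D X, Permutation G X -> Permutation D X -> GKn (S n) G D
| Kn_impL : forall n G D Gm Dl phi psi,
    GKn n (Gm ++ [psi]) (phi :: Dl) ->
    Permutation G (Gm ++ [Imp phi psi]) -> Permutation D Dl -> GKn (S n) G D
| Kn_impR : forall n G D Gm Dl phi psi,
    GKn n (Gm ++ [phi]) (psi :: Dl) ->
    Permutation G Gm -> Permutation D (Imp phi psi :: Dl) -> GKn (S n) G D
| Kn_box : forall n k G D Dl Gm G0 ps,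
    1 <= k ->
    Permutation (rep k Gm) (G0 ++ concat (map fst ps)) ->
    GKn n G0 [] ->
    (forall p, In p ps -> GKn n (fst p) (repeat (snd p) k)) ->
    Permutation G (Dl ++ map Box Gm) ->
    Permutation D (map Box (map snd ps) ++ Dl) -> GKn (S n) G D.

Lemma GKn_mono n G D : GKn n G D -> forall m, n <= m -> GKn m G D.
Proof.
  induction 1; intros m Hm; destruct m as [|m]; try lia.
  - eapply Kn_id; eauto.
  - eapply Kn_impL; eauto. apply IHGKn; lia.
  - eapply Kn_impR; eauto. apply IHGKn; lia.
  - eapply Kn_box; eauto. apply IHGKn; lia. intros p Hp; apply H3; auto; lia.
Qed.

Lemma GKn_GKr n G D : GKn n G D -> GKr G D.
Proof.
  induction 1.
  - eapply GK_id; eauto.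
  - eapply GK_impL; eauto.
  - eapply GK_impR; eauto.
  - eapply GK_box; eauto.
Qed.

Lemma bound_list {T} (Q : nat -> T -> Prop) (ps : list T) :
  (forall n m t, Q n t -> n <= m -> Q m t) ->
  (forall p, In p ps -> exists n, Q n p) -> exists N, forall p, In p ps -> Q N p.
Proof.
  intros Hm. induction ps as [|a ps IH]; intros H.
  - exists 0. intros p [].
  - destruct (H a (or_introl eq_refl)) as [n1 H1].
    destruct IH as [n2 H2]. intros p Hp; apply H; right; auto.
    exists (max n1 n2). intros p [<-|Hp].
    + eapply Hm; eauto; lia.
    + eapply Hm; eauto; lia.
Qed.

Lemma GKr_GKn G D : GKr G D -> exists n, GKn n G D.
Proof.
  induction 1.
  - exists 1. eapply Kn_id; eauto.
  - destruct IHGKr as [n Hn]. exists (S n). eapply Kn_impL; eauto.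
  - destruct IHGKr as [n Hn]. exists (S n). eapply Kn_impR; eauto.
  - destruct IHGKr as [n0 Hn0].
    destruct (bound_list (fun n p => GKn n (fst p) (repeat (snd p) k)) ps) as [N HN].
    { intros; eapply GKn_mono; eauto. }
    { auto. }
    exists (S (max n0 N)). eapply Kn_box; eauto.
    eapply GKn_mono; eauto; lia.
    intros p Hp; eapply GKn_mono; eauto; lia.
Qed.

Definition cf (L : list (list form * list form)) := concat (map fst L).
Definition cs (L : list (list form * list form)) := concat (map snd L).

Definition MixN n A B := exists L, (forall s, In s L -> GKn n (fst s) (snd s)) /\
  Permutation A (cf L) /\ Permutation B (cs L).

Lemma cf_app L1 L2 : cf (L1 ++ L2) = cf L1 ++ cf L2.
Proof. unfold cf; rewrite map_app, concat_app; auto. Qed.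
Lemma cs_app L1 L2 : cs (L1 ++ L2) = cs L1 ++ cs L2.
Proof. unfold cs; rewrite map_app, concat_app; auto. Qed.
Lemma cf_cons s L : cf (s :: L) = fst s ++ cf L.
Proof. reflexivity. Qed.
Lemma cs_cons s L : cs (s :: L) = snd s ++ cs L.
Proof. reflexivity. Qed.

Lemma MixN_nil n : MixN n [] [].
Proof. exists []. split. intros s []. split; constructor. Qed.
Lemma MixN_one n A B : GKn n A B -> MixN n A B.
Proof. intros H. exists [(A,B)]. split. intros s [<-|[]]; auto.
  unfold cf, cs; simpl; rewrite !app_nil_r; split; reflexivity. Qed.
Lemma MixN_app n A B A' B' : MixN n A B -> MixN n A' B' -> MixN n (A ++ A') (B ++ B').
Proof.
  intros [L [H1 [H2 H3]]] [L' [H1' [H2' H3']]]. exists (L ++ L').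
  split. intros s Hs; apply in_app_or in Hs; destruct Hs; auto.
  rewrite cf_app, cs_app, H2, H3, H2', H3'. split; reflexivity.
Qed.
Lemma MixN_perm n A B A' B' : MixN n A B -> Permutation A A' -> Permutation B B' -> MixN n A' B'.
Proof.
  intros [L [H1 [H2 H3]]] HA HB. exists L. split; auto. rewrite <- HA, <- HB; auto.
Qed.
Lemma MixN_rep n A B c : MixN n A B -> MixN n (rep c A) (rep c B).
Proof. intros H; induction c; simpl. apply MixN_nil. apply MixN_app; auto. Qed.

Definition bd n k G D := exists Dl Gm G0 ps, 1 <= k /\
  Permutation (rep k Gm) (G0 ++ concat (map fst ps)) /\ MixN n G0 [] /\
  (forall p, In p ps -> MixN n (fst p) (repeat (snd p) k)) /\
  Permutation G (Dl ++ map Box Gm) /\ Permutation D (map Box (map snd ps) ++ Dl).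

Lemma bd_scale n k G D c : bd n k G D -> 1 <= c -> bd n (c * k) G D.
Proof.
  intros [Dl [Gm [G0 [ps [Hk [Hr [H0 [Hp [HG HD]]]]]]]]] Hc.
  exists Dl, Gm, (rep c G0), (map (fun p => (rep c (fst p), snd p)) ps).
  split. nia. split.
  { rewrite <- rep_mul. rewrite (rep_perm _ _ _ Hr), rep_app, rep_concat.
    rewrite !map_map. simpl. reflexivity. }
  split. { rewrite <- (rep_nil c). apply MixN_rep; auto. }
  split. { intros p Hp2. apply in_map_iff in Hp2. destruct Hp2 as [q [<- Hq]]. simpl.
    rewrite <- rep_repeat. apply MixN_rep; auto. }
  split; auto. rewrite HD, !map_map. simpl. reflexivity.
Qed.

Lemma bd_app n k G D G' D' : bd n k G D -> bd n k G' D' -> bd n k (G ++ G') (D ++ D').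
Proof.
  intros [Dl [Gm [G0 [ps [Hk [Hr [H0 [Hp [HG HD]]]]]]]]]
         [Dl' [Gm' [G0' [ps' [Hk' [Hr' [H0' [Hp' [HG' HD']]]]]]]]].
  exists (Dl ++ Dl'), (Gm ++ Gm'), (G0 ++ G0'), (ps ++ ps').
  split; auto. split.
  { rewrite rep_app, Hr, Hr'. rewrite !map_app, concat_app. psolve. }
  split. { change (@nil form) with (@nil form ++ []). apply MixN_app; auto. }
  split. { intros p Hp2; apply in_app_or in Hp2; destruct Hp2; auto. }
  split. { rewrite HG, HG', map_app. psolve. }
  rewrite HD, HD', !map_app. psolve.
Qed.

Lemma bd_list n L : (forall s, In s L -> exists k, bd n k (fst s) (snd s)) ->
  exists k, bd n k (cf L) (cs L).
Proof.
  induction L as [|s L IH]; intros H.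
  - exists 1. exists [], [], [], []. split; auto. split. simpl; constructor.
    split. apply MixN_nil. split. intros p []. split; constructor.
  - destruct (H s (or_introl eq_refl)) as [k1 H1].
    destruct IH as [k2 H2]. intros; apply H; right; auto.
    assert (1 <= k1) by (destruct H1 as [? [? [? [? [? _]]]]]; auto).
    assert (1 <= k2) by (destruct H2 as [? [? [? [? [? _]]]]]; auto).
    exists (k2 * k1). rewrite cf_cons, cs_cons. apply bd_app.
    apply bd_scale; auto. rewrite Nat.mul_comm. apply bd_scale; auto.
Qed.

Lemma bd_GKr n k G D : (forall A B, MixN n A B -> GKr A B) -> bd n k G D -> GKr G D.
Proof.
  intros IH [Dl [Gm [G0 [ps [Hk [Hr [H0 [Hp [HG HD]]]]]]]]].
  eapply GK_box; eauto.
Qed.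

Fixpoint fsz (f : form) : nat :=
  match f with Var _ => 1 | Imp a b => S (fsz a + fsz b) | Box a => S (fsz a) end.
Definition lsz (l : list form) := list_sum (map fsz l).
Lemma lsz_app a b : lsz (a ++ b) = lsz a + lsz b.
Proof. unfold lsz; rewrite map_app, list_sum_app; auto. Qed.
Lemma lsz_cons x b : lsz (x :: b) = fsz x + lsz b.
Proof. reflexivity. Qed.
Lemma lsz_perm a b : Permutation a b -> lsz a = lsz b.
Proof. induction 1; unfold lsz in *; simpl in *; lia. Qed.

Definition wt (s : list form * list form) := lsz (fst s) + lsz (snd s) + 1.
Definition wL (L : list (list form * list form)) := list_sum (map wt L).
Lemma wL_app a b : wL (a ++ b) = wL a + wL b.
Proof. unfold wL; rewrite map_app, list_sum_app; auto. Qed.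
Lemma wL_cons a b : wL (a :: b) = wt a + wL b.
Proof. reflexivity. Qed.

Definition nb n G D :=
  (exists X, Permutation G X /\ Permutation D X) \/
  (exists Gm Dl phi psi, GKn n (Gm ++ [psi]) (phi :: Dl) /\ Permutation G (Gm ++ [Imp phi psi]) /\ Permutation D Dl) \/
  (exists Gm Dl phi psi, GKn n (Gm ++ [phi]) (psi :: Dl) /\ Permutation G Gm /\ Permutation D (Imp phi psi :: Dl)).

Lemma inv_Kn n G D : GKn (S n) G D -> nb n G D \/ exists k, bd n k G D.
Proof.
  intros H; inversion H; subst.
  - left; left; eauto.
  - left; right; left. do 4 eexists; split; [eassumption|split; eassumption].
  - left; right; right. do 4 eexists; split; [eassumption|split; eassumption].
  - right. exists k, Dl, Gm, G1, ps. repeat split; eauto.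
    apply MixN_one; auto. intros p Hp; apply MixN_one; auto.
Qed.

Lemma split_choice {T} (A B : T -> Prop) L : (forall s, In s L -> A s \/ B s) ->
  (exists s, In s L /\ A s) \/ (forall s, In s L -> B s).
Proof.
  induction L as [|a L IH]; intros H.
  - right; intros s [].
  - destruct (H a (or_introl eq_refl)) as [Ha|Hb].
    + left; exists a; simpl; auto.
    + destruct IH as [[s [Hs1 Hs2]]|Hall]. intros; apply H; right; auto.
      * left; exists s; simpl; auto.
      * right; intros s [<-|Hs]; auto.
Qed.

Theorem MM n : forall L, (forall s, In s L -> GKn n (fst s) (snd s)) -> GKr (cf L) (cs L).
Proof.
  induction n as [|n IHn]; intros L HL.
  - destruct L as [|s L]. apply GKr_nil. specialize (HL s (or_introl eq_refl)). inversion HL.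
  - assert (IHM : forall A B, MixN n A B -> GKr A B).
    { intros A B [L' [H1 [H2 H3]]]. eapply GKr_perm. apply IHn; eauto.
      symmetry; auto. symmetry; auto. }
    assert (W : forall w L, wL L < w -> (forall s, In s L -> GKn (S n) (fst s) (snd s)) -> GKr (cf L) (cs L)).
    2:{ eapply W; eauto. }
    clear L HL. induction w as [|w IHw]; intros L Hw HL. lia.
    destruct (split_choice (fun s => nb n (fst s) (snd s)) (fun s => exists k, bd n k (fst s) (snd s)) L)
      as [[s [Hs Hnb]]|Hall].
    { intros s Hs. apply inv_Kn. auto. }
    2:{ destruct (bd_list n L Hall) as [k Hk]. eapply bd_GKr; eauto. }
    apply in_split in Hs. destruct Hs as [L1 [L2 ->]].
    rewrite wL_app, wL_cons in Hw.
    assert (HL' : forall s', In s' (L1 ++ L2) -> GKn (S n) (fst s') (snd s')).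
    { intros s' Hs'. apply HL. apply in_app_or in Hs'. apply in_or_app. simpl. tauto. }
    destruct s as [G D]. unfold wt in Hw; simpl in Hw, Hnb.
    rewrite cf_app, cs_app, cf_cons, cs_cons. simpl.
    destruct Hnb as [[X [HG HD]]|[[Gm [Dl [phi [psi [Hp [HG HD]]]]]]|[Gm [Dl [phi [psi [Hp [HG HD]]]]]]]].
    + assert (H := IHw (L1 ++ L2)). rewrite wL_app in H. specialize (H ltac:(lia) HL').
      rewrite cf_app, cs_app in H. apply (GKr_ctx _ _ X) in H.
      eapply GKr_perm; [exact H| rewrite HG; psolve | rewrite HD; psolve].
    + assert (H := IHw (L1 ++ (Gm ++ [psi], phi :: Dl) :: L2)).
      rewrite wL_app, wL_cons in H. unfold wt in H; simpl in H.
      rewrite (lsz_perm _ _ HG), (lsz_perm _ _ HD), !lsz_app, !lsz_cons in Hw.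
      rewrite !lsz_app, !lsz_cons in H. simpl in Hw.
      change (lsz []) with 0 in *. specialize (H ltac:(lia)).
      rewrite cf_app, cs_app, cf_cons, cs_cons in H. simpl in H.
      apply (GK_impL _ _ (cf L1 ++ Gm ++ cf L2) (cs L1 ++ Dl ++ cs L2) phi psi).
      * eapply GKr_perm. apply H.
        { intros s' Hs'. apply in_app_or in Hs'. destruct Hs' as [Hs'|[<-|Hs']].
          apply HL; apply in_or_app; auto. simpl. eapply GKn_mono; eauto.
          apply HL; apply in_or_app; simpl; auto. }
        psolve. psolve.
      * rewrite HG; psolve.
      * rewrite HD; psolve.
    + assert (H := IHw (L1 ++ (Gm ++ [phi], psi :: Dl) :: L2)).
      rewrite wL_app, wL_cons in H. unfold wt in H; simpl in H.
      rewrite (lsz_perm _ _ HG), (lsz_perm _ _ HD), !lsz_cons in Hw.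
      rewrite !lsz_app, !lsz_cons in H. simpl in Hw.
      change (lsz []) with 0 in *. specialize (H ltac:(lia)).
      rewrite cf_app, cs_app, cf_cons, cs_cons in H. simpl in H.
      apply (GK_impR _ _ (cf L1 ++ Gm ++ cf L2) (cs L1 ++ Dl ++ cs L2) phi psi).
      * eapply GKr_perm. apply H.
        { intros s' Hs'. apply in_app_or in Hs'. destruct Hs' as [Hs'|[<-|Hs']].
          apply HL; apply in_or_app; auto. simpl. eapply GKn_mono; eauto.
          apply HL; apply in_or_app; simpl; auto. }
        psolve. psolve.
      * rewrite HG; psolve.
      * rewrite HD; psolve.
Qed.

Theorem mix G D P S : GKr G D -> GKr P S -> GKr (G ++ P) (S ++ D).
Proof.
  intros H1 H2. apply GKr_GKn in H1, H2. destruct H1 as [n1 H1], H2 as [n2 H2].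
  assert (H := MM (max n1 n2) [(G, D); (P, S)]).
  unfold cf, cs in H; simpl in H. rewrite !app_nil_r in H.
  eapply GKr_perm. apply H.
  intros s [<-|[<-|[]]]; simpl; eapply GKn_mono; eauto; lia.
  reflexivity. apply Permutation_app_comm.
Qed.

Lemma form_eq_dec (x y : form) : {x = y} + {x <> y}.
Proof. decide equality; apply Nat.eq_dec. Qed.

Lemma perm_cons_cases (x y : form) l1 l2 : Permutation (x :: l1) (y :: l2) ->
  (x = y /\ Permutation l1 l2) \/ (exists l3, Permutation l1 (y :: l3) /\ Permutation l2 (x :: l3)).
Proof.
  intros H. destruct (form_eq_dec x y) as [<-|Hne].
  - left; split; auto. eapply Permutation_cons_inv; eauto.
  - right. assert (Hi : In y (x :: l1)) by (eapply Permutation_in; [symmetry; eauto| left; auto]).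
    destruct Hi as [Hi|Hi]. congruence.
    apply in_split in Hi. destruct Hi as [u [v ->]].
    exists (u ++ v). split. psolve.
    symmetry. apply (Permutation_cons_inv (a := y)).
    apply Permutation_trans with (x :: u ++ y :: v); [psolve | exact H].
Qed.

Lemma perm_snoc_cases (x y : form) l1 l2 : Permutation (l1 ++ [x]) (l2 ++ [y]) ->
  (x = y /\ Permutation l1 l2) \/ (exists l3, Permutation l1 (l3 ++ [y]) /\ Permutation l2 (l3 ++ [x])).
Proof.
  intros H. assert (H' : Permutation (x :: l1) (y :: l2)).
  { rewrite (Permutation_cons_append l1), H. psolve. }
  destruct (perm_cons_cases _ _ _ _ H') as [[? ?]|[l3 [? ?]]]; [left; auto|right; exists l3].
  split. rewrite H0; psolve. rewrite H1; psolve.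
Qed.

Lemma b1 phi psi : GKr [psi] [phi; Imp phi psi].
Proof.
  apply (GK_impR _ _ [psi] [phi] phi psi). apply (GK_id _ _ [psi; phi]); psolve.
  reflexivity. apply perm_swap.
Qed.
Lemma b2 phi psi : GKr [Imp phi psi; phi] [psi].
Proof.
  apply (GK_impL _ _ [phi] [psi] phi psi). apply (GK_id _ _ [phi; psi]); psolve.
  psolve. reflexivity.
Qed.

Lemma imp_in_Dl a b Dl Gm : In (Imp a b) (Dl ++ map Box Gm) -> In (Imp a b) Dl.
Proof.
  intros H; apply in_app_or in H; destruct H as [H|H]; auto.
  apply in_map_iff in H. destruct H as [? [? _]]; discriminate.
Qed.
Lemma imp_in_Dl' a b Dl Gm : In (Imp a b) (map Box Gm ++ Dl) -> In (Imp a b) Dl.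
Proof.
  intros H; apply in_app_or in H; destruct H as [H|H]; auto.
  apply in_map_iff in H. destruct H as [? [? _]]; discriminate.
Qed.

Lemma invL L R : GKr L R -> forall Gam phi psi, Permutation L (Gam ++ [Imp phi psi]) ->
  GKr (Gam ++ [psi]) (phi :: R).
Proof.
  induction 1 as [G D X HG HD | G D Gm Dl a b Hd IH HG HD | G D Gm Dl a b Hd IH HG HD
    | k G D Dl Gm G0 ps Hk Hr H0 IH0 Hp IHp HG HD]; intros Gam phi psi HL.
  - assert (H := GKr_ctx _ _ Gam (b1 phi psi)).
    eapply GKr_perm; [exact H | reflexivity | ]. rewrite HD, <- HG, HL. psolve.
  - assert (HP : Permutation (Gm ++ [Imp a b]) (Gam ++ [Imp phi psi])) by (rewrite <- HG; auto).
    destruct (perm_snoc_cases _ _ _ _ HP) as [[He Hpm]|[l3 [H1 H2]]].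
    + injection He as -> ->. eapply GKr_perm; [exact Hd| rewrite Hpm; reflexivity | rewrite HD; reflexivity].
    + assert (H := IH (l3 ++ [b]) phi psi ltac:(rewrite H1; psolve)).
      apply (GK_impL _ _ (l3 ++ [psi]) (phi :: Dl) a b).
      * eapply GKr_perm; [exact H | psolve | psolve].
      * rewrite H2; psolve.
      * rewrite HD; psolve.
  - assert (H := IH (Gam ++ [a]) phi psi ltac:(rewrite <- HG, HL; psolve)).
    apply (GK_impR _ _ (Gam ++ [psi]) (phi :: Dl) a b).
    * eapply GKr_perm; [exact H | psolve | psolve].
    * reflexivity.
    * rewrite HD; psolve.
  - assert (Hi : In (Imp phi psi) Dl).
    { apply (imp_in_Dl _ _ _ Gm). rewrite <- HG, HL. apply in_or_app; right; left; auto. }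
    apply in_split in Hi. destruct Hi as [u [v ->]].
    assert (HB : GKr ((u ++ v) ++ map Box Gm) (map Box (map snd ps) ++ (u ++ v))).
    { eapply GK_box; eauto; reflexivity. }
    assert (H := mix _ _ _ _ HB (b1 phi psi)).
    assert (HGam : Permutation Gam ((u ++ v) ++ map Box Gm)).
    { apply (Permutation_app_inv_r [Imp phi psi]). rewrite <- HL, HG. psolve. }
    eapply GKr_perm; [exact H | rewrite HGam; psolve | rewrite HD; psolve].
Qed.

Lemma invR L R : GKr L R -> forall Del phi psi, Permutation R (Imp phi psi :: Del) ->
  GKr (L ++ [phi]) (psi :: Del).
Proof.
  induction 1 as [G D X HG HD | G D Gm Dl a b Hd IH HG HD | G D Gm Dl a b Hd IH HG HD
    | k G D Dl Gm G0 ps Hk Hr H0 IH0 Hp IHp HG HD]; intros Del phi psi HR.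
  - assert (H := GKr_ctx _ _ Del (b2 phi psi)).
    eapply GKr_perm; [exact H | | reflexivity]. rewrite HG, <- HD, HR. psolve.
  - assert (H := IH (a :: Del) phi psi ltac:(rewrite <- HD, HR; apply perm_swap)).
    apply (GK_impL _ _ (Gm ++ [phi]) (psi :: Del) a b).
    * eapply GKr_perm; [exact H | psolve | psolve].
    * rewrite HG; psolve.
    * reflexivity.
  - assert (HP : Permutation (Imp a b :: Dl) (Imp phi psi :: Del)) by (rewrite <- HD; auto).
    destruct (perm_cons_cases _ _ _ _ HP) as [[He Hpm]|[l3 [H1 H2]]].
    + injection He as -> ->. eapply GKr_perm; [exact Hd| rewrite HG; reflexivity | rewrite Hpm; reflexivity].
    + assert (H := IH (b :: l3) phi psi ltac:(rewrite H1; apply perm_swap)).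
      apply (GK_impR _ _ (Gm ++ [phi]) (psi :: l3) a b).
      * eapply GKr_perm; [exact H | psolve | psolve].
      * rewrite HG; reflexivity.
      * rewrite H2; psolve.
  - assert (Hi : In (Imp phi psi) Dl).
    { apply (imp_in_Dl' _ _ _ (map snd ps)). rewrite <- HD, HR. left; auto. }
    apply in_split in Hi. destruct Hi as [u [v ->]].
    assert (HB : GKr ((u ++ v) ++ map Box Gm) (map Box (map snd ps) ++ (u ++ v))).
    { eapply GK_box; eauto; reflexivity. }
    assert (H := mix _ _ _ _ HB (b2 phi psi)).
    assert (HDel : Permutation Del (map Box (map snd ps) ++ u ++ v)).
    { apply (Permutation_cons_inv (a := Imp phi psi)). rewrite <- HR, HD. psolve. }
    eapply GKr_perm; [exact H | rewrite HG; psolve | rewrite HDel; psolve].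
Qed.

Lemma iterL phi psi j : forall A B, GKr (A ++ repeat (Imp phi psi) j) B ->
  GKr (A ++ repeat psi j) (repeat phi j ++ B).
Proof.
  induction j; intros A B H; simpl in *. auto.
  assert (H1 := invL _ _ H (A ++ repeat (Imp phi psi) j) phi psi ltac:(psolve)).
  assert (H2 := IHj (A ++ [psi]) (phi :: B) ltac:(eapply GKr_perm; [exact H1| psolve | reflexivity])).
  eapply GKr_perm; [exact H2 | psolve | psolve].
Qed.

Lemma iterR phi psi j : forall A B, GKr A (repeat (Imp phi psi) j ++ B) ->
  GKr (A ++ repeat phi j) (repeat psi j ++ B).
Proof.
  induction j; intros A B H; simpl in *. rewrite app_nil_r; auto.
  assert (H1 := invR _ _ H (repeat (Imp phi psi) j ++ B) phi psi ltac:(reflexivity)).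
  assert (H2 := IHj (A ++ [phi]) (psi :: B) ltac:(eapply GKr_perm; [exact H1| reflexivity | psolve])).
  eapply GKr_perm; [exact H2 | psolve | psolve].
Qed.

Definition nbf (f : form) : list form := match f with Box _ => [] | g => [g] end.
Definition bxf (f : form) : list form := match f with Box g => [g] | _ => [] end.
Definition nbx l := flat_map nbf l.
Definition bxs l := flat_map bxf l.

Lemma split_perm l : Permutation l (nbx l ++ map Box (bxs l)).
Proof.
  induction l as [|a l IH]; simpl. reflexivity.
  unfold nbx, bxs in *; simpl. destruct a; simpl; rewrite IH at 1; psolve.
Qed.
Lemma nbx_app a b : nbx (a ++ b) = nbx a ++ nbx b.
Proof. apply flat_map_app. Qed.
Lemma bxs_app a b : bxs (a ++ b) = bxs a ++ bxs b.
Proof. apply flat_map_app. Qed.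
Lemma nbx_perm a b : Permutation a b -> Permutation (nbx a) (nbx b).
Proof. intros H; unfold nbx; rewrite H; reflexivity. Qed.
Lemma bxs_perm a b : Permutation a b -> Permutation (bxs a) (bxs b).
Proof. intros H; unfold bxs; rewrite H; reflexivity. Qed.
Lemma nbx_mapBox B : nbx (map Box B) = [].
Proof. induction B; simpl; auto. Qed.
Lemma bxs_mapBox B : bxs (map Box B) = B.
Proof. induction B; simpl; auto. unfold bxs in *; simpl; rewrite IHB; auto. Qed.
Lemma nbx_rep n l : nbx (rep n l) = rep n (nbx l).
Proof. induction n; simpl; auto. rewrite nbx_app, IHn; auto. Qed.
Lemma bxs_rep n l : bxs (rep n l) = rep n (bxs l).
Proof. induction n; simpl; auto. rewrite bxs_app, IHn; auto. Qed.

Lemma count_rep n l x : count_occ form_eq_dec (rep n l) x = n * count_occ form_eq_dec l x.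
Proof. induction n; simpl; auto. rewrite count_occ_app, IHn; auto. Qed.

Lemma rep_cancel n (a b : list form) : 1 <= n -> Permutation (rep n a) (rep n b) -> Permutation a b.
Proof.
  intros Hn H. rewrite (Permutation_count_occ form_eq_dec) in *.
  intros x. specialize (H x). rewrite !count_rep in H. nia.
Qed.

Lemma extract1 (ps : list (list form * form)) y T : Permutation (map snd ps) (y :: T) ->
  exists p ps0, Permutation ps (p :: ps0) /\ snd p = y /\ Permutation (map snd ps0) T.
Proof.
  intros H. assert (Hi : In y (map snd ps)) by (eapply Permutation_in; [symmetry; eauto| left; auto]).
  apply in_map_iff in Hi. destruct Hi as [p [Hp Hi]].
  apply in_split in Hi. destruct Hi as [u [v ->]].
  exists p, (u ++ v). split. apply Permutation_sym, Permutation_middle. split; auto.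
  apply (Permutation_cons_inv (a := y)). rewrite <- H. rewrite !map_app. simpl. rewrite Hp.
  psolve.
Qed.

Lemma extractn (y : form) j : forall (ps : list (list form * form)) T,
  Permutation (map snd ps) (repeat y j ++ T) ->
  exists ps1 ps0, Permutation ps (ps1 ++ ps0) /\ length ps1 = j /\
    (forall p, In p ps1 -> snd p = y) /\ Permutation (map snd ps0) T.
Proof.
  induction j; intros ps T H; simpl in *.
  - exists [], ps. split. reflexivity. split; auto. split; auto. intros p [].
  - destruct (extract1 _ _ _ H) as [p [ps0' [H1 [H2 H3]]]].
    destruct (IHj _ _ H3) as [ps1 [ps0 [K1 [K2 [K3 K4]]]]].
    exists (p :: ps1), ps0. split. rewrite H1, K1. reflexivity.
    split. simpl; auto. split; auto. intros q [<-|Hq]; auto.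
Qed.

Lemma mixlist (y : form) k (ps1 : list (list form * form)) :
  (forall p, In p ps1 -> snd p = y /\ GKr (fst p) (repeat y k)) ->
  GKr (concat (map fst ps1)) (repeat y (length ps1 * k)).
Proof.
  induction ps1 as [|p ps1 IH]; intros H; simpl. apply GKr_nil.
  destruct (H p (or_introl eq_refl)) as [_ Hp].
  assert (H2 := mix _ _ _ _ Hp (IH (fun q Hq => H q (or_intror Hq)))).
  eapply GKr_perm; [exact H2| reflexivity|]. rewrite repeat_app. apply Permutation_app_comm.
Qed.

Lemma group n k (Y : list form) : forall (ps : list (list form * form)),
  Permutation (map snd ps) (rep n Y) ->
  (forall p, In p ps -> GKr (fst p) (repeat (snd p) k)) ->
  exists ps', map snd ps' = Y /\ Permutation (concat (map fst ps')) (concat (map fst ps)) /\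
    forall p, In p ps' -> GKr (fst p) (repeat (snd p) (n * k)).
Proof.
  induction Y as [|y Y IH]; intros ps H Hp.
  - rewrite rep_nil in H. apply Permutation_sym, Permutation_nil in H.
    apply map_eq_nil in H. subst. exists []. simpl. split; auto. split. reflexivity. intros p [].
  - assert (H' : Permutation (map snd ps) (repeat y n ++ rep n Y)).
    { rewrite H. change (y :: Y) with ([y] ++ Y). rewrite rep_app, rep_single. reflexivity. }
    destruct (extractn y n ps _ H') as [ps1 [ps0 [K1 [K2 [K3 K4]]]]].
    destruct (IH ps0 K4) as [ps0' [J1 [J2 J3]]].
    { intros p Hi. apply Hp. eapply Permutation_in. symmetry; exact K1. apply in_or_app; auto. }
    exists ((concat (map fst ps1), y) :: ps0'). split. simpl; rewrite J1; auto.
    split.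
    + simpl. rewrite J2. rewrite <- concat_app, <- map_app. apply concat_perm, Permutation_map.
      symmetry; auto.
    + intros p [<-|Hi]; auto. simpl. rewrite <- K2. apply mixlist.
      intros q Hq. assert (Hy := K3 q Hq). split; auto. rewrite <- Hy. apply Hp.
      eapply Permutation_in. symmetry; exact K1. apply in_or_app; auto.
Qed.

Lemma sc_box n G D : 1 <= n -> GKr (rep n G) (rep n D) ->
  (forall a b, ~ In (Imp a b) G) -> (forall a b, ~ In (Imp a b) D) -> GKr G D.
Proof.
  intros Hn Hd HnG HnD. inversion Hd as [G' D' X HG HD | G' D' Gm Dl a b Hd' HG HD
    | G' D' Gm Dl a b Hd' HG HD | k G' D' Dl Gm G0 ps Hk Hr H0 Hp HG HD]; subst.
  - apply (GK_id _ _ D); [|reflexivity]. apply (rep_cancel n); auto. rewrite HG, HD; reflexivity.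
  - exfalso. apply (HnG a b). apply (in_rep n). eapply Permutation_in. symmetry; exact HG.
    apply in_or_app; right; left; auto.
  - exfalso. apply (HnD a b). apply (in_rep n). eapply Permutation_in. symmetry; exact HD.
    left; auto.
  - assert (HGn := nbx_perm _ _ HG). rewrite nbx_rep, nbx_app, nbx_mapBox, app_nil_r in HGn.
    assert (HGb := bxs_perm _ _ HG). rewrite bxs_rep, bxs_app, bxs_mapBox in HGb.
    assert (HDn := nbx_perm _ _ HD). rewrite nbx_rep, nbx_app, nbx_mapBox in HDn. simpl in HDn.
    assert (HDb := bxs_perm _ _ HD). rewrite bxs_rep, bxs_app, bxs_mapBox in HDb.
    assert (Hcan : Permutation (nbx G) (nbx D)) by (apply (rep_cancel n); auto; rewrite HGn, HDn; reflexivity).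
    set (ps2 := ps ++ map (fun c => (repeat c k, c)) (bxs Dl)).
    destruct (group n k (bxs D) ps2) as [ps' [Q1 [Q2 Q3]]].
    { unfold ps2. rewrite map_app, map_map. simpl. rewrite map_id. symmetry; auto. }
    { unfold ps2. intros p Hi. apply in_app_or in Hi. destruct Hi as [Hi|Hi]; auto.
      apply in_map_iff in Hi. destruct Hi as [c [<- _]]. simpl. apply (GK_id _ _ (repeat c k)); reflexivity. }
    apply (GK_box (n * k) G D (nbx G) (bxs G) G0 ps'); auto.
    + nia.
    + rewrite Nat.mul_comm, <- rep_mul, (rep_perm _ _ _ HGb), rep_app, Hr, Q2.
      unfold ps2. rewrite map_app, concat_app, map_map. simpl. rewrite concat_repeat. psolve.
    + apply split_perm.
    + rewrite Q1, Hcan. eapply Permutation_trans; [apply split_perm|]. apply Permutation_app_comm.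
Qed.

Theorem sc n : 1 <= n -> forall G D, GKr (rep n G) (rep n D) -> GKr G D.
Proof.
  intros Hn.
  assert (W : forall w G D, lsz G + lsz D < w -> GKr (rep n G) (rep n D) -> GKr G D).
  2:{ intros G D; apply (W (S (lsz G + lsz D))); lia. }
  induction w as [|w IH]; intros G D Hw Hd. lia.
  destruct (classic (exists a b, In (Imp a b) G)) as [[a [b Hi]]|HnG].
  { apply in_split in Hi. destruct Hi as [u [v ->]].
    assert (Hp : Permutation (u ++ Imp a b :: v) ((u ++ v) ++ [Imp a b])) by psolve.
    assert (H1 : GKr (rep n (u ++ v) ++ repeat (Imp a b) n) (rep n D)).
    { eapply GKr_perm; [exact Hd| | reflexivity]. rewrite (rep_perm n _ _ Hp), rep_app, rep_single. reflexivity. }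
    apply iterL in H1.
    assert (H2 : GKr ((u ++ v) ++ [b]) (a :: D)).
    { apply IH. rewrite (lsz_perm _ _ Hp) in Hw. rewrite !lsz_app, !lsz_cons in *. simpl in Hw.
      change (lsz []) with 0 in *. lia.
      eapply GKr_perm; [exact H1| |]. rewrite (rep_app n (u ++ v) [b]), rep_single; reflexivity.
      change (a :: D) with ([a] ++ D). rewrite rep_app, rep_single; reflexivity. }
    apply (GK_impL _ _ (u ++ v) D a b H2); auto. }
  destruct (classic (exists a b, In (Imp a b) D)) as [[a [b Hi]]|HnD].
  { apply in_split in Hi. destruct Hi as [u [v ->]].
    assert (Hp : Permutation (u ++ Imp a b :: v) (Imp a b :: (u ++ v))) by psolve.
    assert (H1 : GKr (rep n G) (repeat (Imp a b) n ++ rep n (u ++ v))).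
    { eapply GKr_perm; [exact Hd| reflexivity |]. rewrite (rep_perm n _ _ Hp).
      change (Imp a b :: u ++ v) with ([Imp a b] ++ (u ++ v)). rewrite (rep_app n [Imp a b]), rep_single. reflexivity. }
    apply iterR in H1.
    assert (H2 : GKr (G ++ [a]) (b :: (u ++ v))).
    { apply IH. rewrite (lsz_perm _ _ Hp) in Hw. rewrite !lsz_app, !lsz_cons in *. simpl in Hw.
      change (lsz []) with 0 in *. lia.
      eapply GKr_perm; [exact H1| |]. rewrite (rep_app n G [a]), rep_single; reflexivity.
      change (b :: u ++ v) with ([b] ++ (u ++ v)). rewrite (rep_app n [b]), rep_single; reflexivity. }
    apply (GK_impR _ _ G (u ++ v) a b H2); auto. }
  apply (sc_box n); auto.
  - intros a b Hi; apply HnG; eauto.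
  - intros a b Hi; apply HnD; eauto.
Qed.

Theorem lemma4p5 :
  (forall G D P S : list form, GKr G D -> GKr P S -> GKr (G ++ P) (S ++ D)) /\
  (forall n : nat, 2 <= n ->
     forall G D : list form, GKr (rep n G) (rep n D) -> GKr G D).
Proof.
  split. exact mix. intros n Hn. apply sc. lia.
Qed.
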